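(* Let $L$ be a localization functor in the category of groups. Assume that for every group $G$ and every group extension $1\to K\to E\to LG\to 1$ in which $K$ and $E$ are $L$-local, the extension $1\to K\to E\times_{LG}G\to G\to 1$ obtained by pulling back along the localization homomorphism $\eta_G\colon G\to LG$ is $L$-flat. Then $L$ is conditionally flat.
   Context: For a group homomorphism $\varphi\colon A\to B$, a group $H$ is $\varphi$-local if $\varphi^*\colon \mathrm{Hom}(B,H)\to\mathrm{Hom}(A,H)$ is a bijection; the localization functor $L=L_\varphi$ assigns to each group $G$ a $\varphi$-local group $LG$ with a natural homomorphism $\eta_G\colon G\to LG$ that is initial among homomorphisms from $G$ to $\varphi$-local groups. A localization functor in groups is one of the form $L_\varphi$; ''$L$-local'' means $\varphi$-local. A group extension $1\to N\to E\to Q\to 1$ is $L$-flat if $1\to LN\to LE\to LQ\to 1$ (with the induced maps) is again a short exact sequence. An extension is fully $L$-flat if its pullback along every homomorphism $Q'\to Q$ is $L$-flat; $L$ is conditionally flat if every $L$-flat extension is fully $L$-flat. *)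

(* Defs.v *)
From Stdlib Require Import ProofIrrelevance.

Set Implicit Arguments.

Record Group := MkGroup {
  carrier :> Type;
  gmul : carrier -> carrier -> carrier;
  gone : carrier;
  ginv : carrier -> carrier;
  gmulA : forall x y z, gmul x (gmul y z) = gmul (gmul x y) z;
  gmul1l : forall x, gmul gone x = x;
  gmul1r : forall x, gmul x gone = x;
  gmulVl : forall x, gmul (ginv x) x = gone;
  gmulVr : forall x, gmul x (ginv x) = gone
}.
Arguments gmul {g}.
Arguments gone {g}.
Arguments ginv {g}.

Record Hom (G H : Group) := MkHom {
  hfun :> G -> H;
  hmul : forall x y, hfun (gmul x y) = gmul (hfun x) (hfun y)
}.

Lemma hom_one (G H : Group) (f : Hom G H) : f gone = gone.
Proof.
  assert (E : gmul (f gone) (f gone) = gmul (f gone) gone).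
  { rewrite <- hmul, gmul1l, gmul1r. reflexivity. }
  assert (E2 := f_equal (gmul (ginv (f gone))) E).
  rewrite !gmulA, gmulVl, !gmul1l in E2. exact E2.
Qed.

Definition hcomp (G H K : Group) (g : Hom H K) (f : Hom G H) : Hom G K.
Proof.
  refine (@MkHom G K (fun x => g (f x)) _).
  intros x y; rewrite !hmul; reflexivity.
Defined.

(* H is phi-local iff phi^* : Hom(B,H) -> Hom(A,H), g |-> g o phi, is a
   bijection (homomorphisms being identified with their underlying maps). *)
Definition is_local (A B : Group) (phi : Hom A B) (H : Group) : Prop :=
  (forall f : Hom A H, exists g : Hom B H, forall a, g (phi a) = f a) /\
  (forall g1 g2 : Hom B H, (forall a, g1 (phi a) = g2 (phi a)) ->
                            forall b, g1 b = g2 b).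

Record Localization (A B : Group) (phi : Hom A B) := MkLocalization {
  LG : Group -> Group;
  eta : forall G : Group, Hom G (LG G);
  LG_local : forall G, is_local phi (LG G);
  LG_univ : forall (G H : Group), is_local phi H -> forall f : Hom G H,
      exists g : Hom (LG G) H,
        (forall x, g (eta G x) = f x) /\
        (forall g' : Hom (LG G) H, (forall x, g' (eta G x) = f x) ->
                                   forall y, g' y = g y)
}.

Record ses (N E Q : Group) (i : Hom N E) (p : Hom E Q) : Prop := MkSes {
  ses_inj : forall n1 n2, i n1 = i n2 -> n1 = n2;
  ses_surj : forall q, exists e, p e = q;
  ses_exact : forall e, p e = gone <-> exists n, i n = e
}.

(* L-flatness: 1 -> LN -> LE -> LQ -> 1, with the induced maps
   (the unique homomorphisms compatible with eta), is short exact. *)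
Definition L_flat (A B : Group) (phi : Hom A B) (L : Localization phi)
    (N E Q : Group) (i : Hom N E) (p : Hom E Q) : Prop :=
  forall (Li : Hom (LG L N) (LG L E)) (Lp : Hom (LG L E) (LG L Q)),
    (forall n, Li (eta L N n) = eta L E (i n)) ->
    (forall e, Lp (eta L E e) = eta L Q (p e)) ->
    ses Li Lp.

Section Pullback.
Variables (E Q Q' : Group) (p : Hom E Q) (h : Hom Q' Q).

Definition pb_car := { x : E * Q' | p (fst x) = h (snd x) }.

Lemma pb_eq (x y : pb_car) : proj1_sig x = proj1_sig y -> x = y.
Proof.
  destruct x as [x hx], y as [y hy]; simpl; intros ->.
  f_equal; apply proof_irrelevance.
Qed.

Definition pb_mul (x y : pb_car) : pb_car.
Proof.
  refine (exist _ (gmul (fst (proj1_sig x)) (fst (proj1_sig y)),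
                   gmul (snd (proj1_sig x)) (snd (proj1_sig y))) _).
  simpl; rewrite !hmul, (proj2_sig x), (proj2_sig y); reflexivity.
Defined.

Definition pb_one : pb_car.
Proof.
  refine (exist _ (gone, gone) _); simpl; rewrite !hom_one; reflexivity.
Defined.

Lemma hom_inv (G H : Group) (f : Hom G H) x : f (ginv x) = ginv (f x).
Proof.
  assert (E1 : gmul (f (ginv x)) (f x) = gmul (ginv (f x)) (f x)).
  { rewrite <- hmul, gmulVl, gmulVl; apply hom_one. }
  assert (E2 := f_equal (fun z => gmul z (ginv (f x))) E1); simpl in E2.
  rewrite <- !gmulA, gmulVr, !gmul1r in E2; exact E2.
Qed.

Definition pb_inv (x : pb_car) : pb_car.
Proof.
  refine (exist _ (ginv (fst (proj1_sig x)), ginv (snd (proj1_sig x))) _).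
  simpl; rewrite !hom_inv, (proj2_sig x); reflexivity.
Defined.

Definition pullback : Group.
Proof.
  refine (@MkGroup pb_car pb_mul pb_one pb_inv _ _ _ _ _);
  intros; apply pb_eq; simpl;
  rewrite ?gmulA, ?gmul1l, ?gmul1r, ?gmulVl, ?gmulVr; try reflexivity;
  destruct (proj1_sig _); reflexivity.
Defined.

Definition pb_proj : Hom pullback Q'.
Proof.
  refine (@MkHom pullback Q' (fun x => snd (proj1_sig x)) _).
  intros; reflexivity.
Defined.

Variables (N : Group) (i : Hom N E).

Definition pb_in (H : ses i p) : Hom N pullback.
Proof.
  assert (P : forall n, p (fst (i n, @gone Q')) = h (snd (i n, @gone Q'))).
  { intro n; simpl; rewrite (hom_one h); apply (proj2 (ses_exact H (i n))); eauto. }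
  refine (@MkHom N pullback (fun n => exist _ (i n, gone) (P n)) _).
  intros; apply pb_eq; simpl; rewrite hmul, gmul1l; reflexivity.
Defined.
End Pullback.

Definition fully_L_flat (A B : Group) (phi : Hom A B) (L : Localization phi)
    (N E Q : Group) (i : Hom N E) (p : Hom E Q) (H : ses i p) : Prop :=
  forall (Q' : Group) (h : Hom Q' Q),
    L_flat L (pb_in h H) (pb_proj p h).

Definition conditionally_flat (A B : Group) (phi : Hom A B)
    (L : Localization phi) : Prop :=
  forall (N E Q : Group) (i : Hom N E) (p : Hom E Q) (H : ses i p),
    L_flat L i p -> fully_L_flat L H.

(* Main.v *)
Require Import Defs.
From Stdlib Require Import ClassicalEpsilon ProofIrrelevance.
Set Implicit Arguments.

Lemma mulKl {G : Group} (x y : G) : gmul (ginv x) (gmul x y) = y.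
Proof. rewrite gmulA, gmulVl, gmul1l; reflexivity. Qed.
Lemma mulKr {G : Group} (x y : G) : gmul x (gmul (ginv x) y) = y.
Proof. rewrite gmulA, gmulVr, gmul1l; reflexivity. Qed.
Lemma mulKl' {G : Group} (x y : G) : gmul (gmul y x) (ginv x) = y.
Proof. rewrite <- gmulA, gmulVr, gmul1r; reflexivity. Qed.
Lemma mulKr' {G : Group} (x y : G) : gmul (gmul y (ginv x)) x = y.
Proof. rewrite <- gmulA, gmulVl, gmul1r; reflexivity. Qed.
Lemma mul_cancel_l {G : Group} (a x y : G) : gmul a x = gmul a y -> x = y.
Proof. intro H. rewrite <- (mulKl a x), H, mulKl. reflexivity. Qed.
Lemma mul_cancel_r {G : Group} (a x y : G) : gmul x a = gmul y a -> x = y.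
Proof. intro H. rewrite <- (mulKl' a x), H, mulKl'. reflexivity. Qed.
Lemma inv_uniq {G : Group} (x y : G) : gmul x y = gone -> y = ginv x.
Proof. intro H. apply (mul_cancel_l x). rewrite H, gmulVr. reflexivity. Qed.
Lemma inv_mul {G : Group} (x y : G) : ginv (gmul x y) = gmul (ginv y) (ginv x).
Proof. symmetry. apply inv_uniq. rewrite <- gmulA, (gmulA _ y), gmulVr, gmul1l, gmulVr. reflexivity. Qed.
Lemma inv_inv {G : Group} (x : G) : ginv (ginv x) = x.
Proof. symmetry. apply inv_uniq. apply gmulVl. Qed.
Lemma inv_one (G : Group) : ginv (@gone G) = gone.
Proof. symmetry. apply inv_uniq. apply gmul1l. Qed.

Lemma LG_uniq (A B : Group) (phi : Hom A B) (L : Localization phi) (G T : Group)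
  (HT : is_local phi T) (g1 g2 : Hom (LG L G) T) :
  (forall x, g1 (eta L G x) = g2 (eta L G x)) -> forall y, g1 y = g2 y.
Proof.
  intros Hx y.
  destruct (LG_univ L HT (hcomp g1 (eta L G))) as [g [_ Hu]].
  rewrite (Hu g1), (Hu g2); try reflexivity; intro x; simpl; auto.
Qed.

Lemma LG_ext (A B : Group) (phi : Hom A B) (L : Localization phi) (G T : Group)
  (HT : is_local phi T) (f : Hom G T) :
  exists g : Hom (LG L G) T, forall x, g (eta L G x) = f x.
Proof. destruct (LG_univ L HT f) as [g [Hg _]]; eauto. Qed.

Lemma pb_ses (E Q Q' N : Group) (p : Hom E Q) (h : Hom Q' Q) (i : Hom N E)
  (H : ses i p) : ses (pb_in h H) (pb_proj p h).
Proof.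
  constructor.
  - intros n1 n2 Hn. apply (ses_inj H).
    exact (f_equal (fun x => fst (proj1_sig x)) Hn).
  - intro q. destruct (ses_surj H (h q)) as [e He].
    exists (exist _ (e, q) He). reflexivity.
  - intros [[e q] He]; simpl; split.
    + intros Hq. subst q. assert (He' : p e = gone) by (simpl in He; rewrite He; apply hom_one).
      destruct (proj1 (ses_exact H e) He') as [n Hn]. exists n.
      apply pb_eq; simpl; rewrite Hn; reflexivity.
    + intros [n Hn]. symmetry. exact (f_equal (fun x => snd (proj1_sig x)) Hn).
Qed.

Lemma pb_local (A B : Group) (phi : Hom A B) (E Q Q' : Group) (p : Hom E Q) (h : Hom Q' Q) :
  is_local phi E -> is_local phi Q' -> is_local phi Q -> is_local phi (pullback p h).
Proof.
  intros [E1 E2] [Q'1 Q'2] [_ Q2]. split.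
  - intro f.
    set (f1 := MkHom _ _ (fun a => fst (proj1_sig (f a))) (fun x y => f_equal (fun z => fst (proj1_sig z)) (hmul f x y)) : Hom A E).
    set (f2 := MkHom _ _ (fun a => snd (proj1_sig (f a))) (fun x y => f_equal (fun z => snd (proj1_sig z)) (hmul f x y)) : Hom A Q').
    destruct (E1 f1) as [g1 Hg1]. destruct (Q'1 f2) as [g2 Hg2].
    assert (Hc : forall b, p (g1 b) = h (g2 b)).
    { apply (Q2 (hcomp p g1) (hcomp h g2)). intro a; simpl.
      rewrite Hg1, Hg2. simpl. exact (proj2_sig (f a)). }
    unshelve eexists (MkHom _ _ (fun b => exist _ (g1 b, g2 b) (Hc b) : pullback p h) _).
    + intros x y. apply pb_eq; simpl. rewrite !hmul. reflexivity.
    + intro a. apply pb_eq; simpl. rewrite Hg1, Hg2. simpl.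
      destruct (proj1_sig (f a)); reflexivity.
  - intros g1 g2 Hg b. apply pb_eq.
    assert (H1 := E2 (MkHom _ _ (fun b => fst (proj1_sig (g1 b))) (fun x y => f_equal (fun z => fst (proj1_sig z)) (hmul g1 x y)))
                    (MkHom _ _ (fun b => fst (proj1_sig (g2 b))) (fun x y => f_equal (fun z => fst (proj1_sig z)) (hmul g2 x y))) 
                    (fun a => f_equal (fun z => fst (proj1_sig z)) (Hg a)) b).
    assert (H2 := Q'2 (MkHom _ _ (fun b => snd (proj1_sig (g1 b))) (fun x y => f_equal (fun z => snd (proj1_sig z)) (hmul g1 x y)))
                    (MkHom _ _ (fun b => snd (proj1_sig (g2 b))) (fun x y => f_equal (fun z => snd (proj1_sig z)) (hmul g2 x y))) 
                    (fun a => f_equal (fun z => snd (proj1_sig z)) (Hg a)) b).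
    simpl in H1, H2. destruct (proj1_sig (g1 b)), (proj1_sig (g2 b)); simpl in *; subst; reflexivity.
Qed.

Ltac rassoc := repeat rewrite <- gmulA.

Lemma conj_mul {G : Group} (a x y : G) :
  gmul (gmul (gmul a x) (ginv a)) (gmul (gmul a y) (ginv a)) = gmul (gmul a (gmul x y)) (ginv a).
Proof. rassoc. rewrite mulKl. reflexivity. Qed.

Lemma conj_hom {G : Group} (a : G) : Hom G G.
Proof. refine (MkHom _ _ (fun x => gmul (gmul a x) (ginv a)) _). intros; symmetry; apply conj_mul. Defined.

Lemma key_ext (N P M P' T : Group) (j : Hom N P) (Phi : Hom P P') (k : Hom M P') (e : Hom N M)
 (kinj : forall m1 m2, k m1 = k m2 -> m1 = m2)
 (comm : forall n, Phi (j n) = k (e n))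
 (gen : forall z, exists m a, z = gmul (k m) (Phi a))
 (refl : forall a m, Phi a = k m -> exists n, a = j n)
 (norm : forall a m, exists m', gmul (gmul (Phi a) (k m)) (ginv (Phi a)) = k m')
 (Tuniq : forall g1 g2 : Hom M T, (forall n, g1 (e n) = g2 (e n)) -> forall m, g1 m = g2 m)
 (f : Hom P T) (fhat : Hom M T) (Hfhat : forall n, fhat (e n) = f (j n)) :
 exists g : Hom P' T, forall a, g (Phi a) = f a.
Proof.
  assert (Hconj : forall a m m', gmul (gmul (Phi a) (k m)) (ginv (Phi a)) = k m' ->
             fhat m' = gmul (gmul (f a) (fhat m)) (ginv (f a))).
  { intros a.
    assert (Hn : forall m, {m' | gmul (gmul (Phi a) (k m)) (ginv (Phi a)) = k m'})
          by (intro m; apply constructive_indefinite_description; apply norm).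
    set (c := fun m => proj1_sig (Hn m)).
    assert (Hc : forall m, gmul (gmul (Phi a) (k m)) (ginv (Phi a)) = k (c m))
      by (intro m; exact (proj2_sig (Hn m))).
    assert (chom : forall x y, c (gmul x y) = gmul (c x) (c y)).
    { intros x y; apply kinj. rewrite <- Hc, (hmul k x y), (hmul k (c x) (c y)), <- !Hc. symmetry; apply conj_mul. }
    set (g1 := MkHom _ _ (fun m => fhat (c m)) (fun x y => eq_trans (f_equal fhat (chom x y)) (hmul fhat _ _))).
    set (g2 := hcomp (conj_hom (f a)) fhat).
    assert (E : forall m, g1 m = g2 m).
    { apply Tuniq. intro n. simpl.
      assert (Hr : Phi (gmul (gmul a (j n)) (ginv a)) = k (c (e n))).
      { rewrite <- Hc, <- comm, !hmul, hom_inv. reflexivity. }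
      destruct (refl _ _ Hr) as [n' Hn'].
      assert (Hce : c (e n) = e n').
      { apply kinj. rewrite <- Hr, <- comm, Hn'. reflexivity. }
      rewrite Hce, Hfhat, Hfhat, <- Hn', !hmul, hom_inv. reflexivity. }
    intros m m' Hm. assert (m' = c m) as -> by (apply kinj; rewrite <- Hc; symmetry; exact Hm).
    exact (E m). }
  assert (Hwd : forall m1 a1 m2 a2, gmul (k m1) (Phi a1) = gmul (k m2) (Phi a2) ->
            gmul (fhat m1) (f a1) = gmul (fhat m2) (f a2)).
  { intros m1 a1 m2 a2 H.
    assert (H2 : Phi (gmul a2 (ginv a1)) = k (gmul (ginv m2) m1)).
    { rewrite !hmul, hom_inv, hom_inv. apply (mul_cancel_l (k m2)). apply (mul_cancel_r (Phi a1)).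
      rewrite mulKr. rassoc. rewrite gmulVl, gmul1r. symmetry; exact H. }
    destruct (refl _ _ H2) as [n Hn].
    assert (He : e n = gmul (ginv m2) m1) by (apply kinj; rewrite <- comm, <- Hn; exact H2).
    assert (Hm1 : m1 = gmul m2 (e n)) by (rewrite He, mulKr; reflexivity).
    assert (Ha2 : a2 = gmul (j n) a1) by (rewrite <- Hn, mulKr'; reflexivity).
    rewrite Hm1, Ha2, !hmul, Hfhat. rassoc. reflexivity. }
  assert (Hsel : forall z, {p : M * P | z = gmul (k (fst p)) (Phi (snd p))}).
  { intro z. apply constructive_indefinite_description.
    destruct (gen z) as [m [a Hz]]. exists (m, a). exact Hz. }
  set (g := fun z => gmul (fhat (fst (proj1_sig (Hsel z)))) (f (snd (proj1_sig (Hsel z))))).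
  assert (Hg : forall z m a, z = gmul (k m) (Phi a) -> g z = gmul (fhat m) (f a)).
  { intros z m a Hz. unfold g. apply Hwd. rewrite <- (proj2_sig (Hsel z)). exact Hz. }
  unshelve eexists (MkHom _ _ g _).
  - intros z1 z2.
    destruct (gen z1) as [m1 [a1 H1]]. destruct (gen z2) as [m2 [a2 H2]].
    destruct (norm a1 m2) as [m' Hm'].
    rewrite (Hg z1 m1 a1 H1), (Hg z2 m2 a2 H2).
    rewrite (Hg _ (gmul m1 m') (gmul a1 a2)).
    + rewrite !hmul, (Hconj _ _ _ Hm'). rassoc. rewrite mulKl. reflexivity.
    + rewrite H1, H2, !hmul, <- Hm'. rassoc. rewrite mulKl. reflexivity.
  - intro a. simpl. rewrite (Hg _ gone a).
    + rewrite hom_one, gmul1l. reflexivity.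
    + rewrite hom_one, gmul1l. reflexivity.
Qed.

Lemma key_uniq (N P M P' T : Group) (j : Hom N P) (Phi : Hom P P') (k : Hom M P') (e : Hom N M)
 (comm : forall n, Phi (j n) = k (e n))
 (gen : forall z, exists m a, z = gmul (k m) (Phi a))
 (Tuniq : forall g1 g2 : Hom M T, (forall n, g1 (e n) = g2 (e n)) -> forall m, g1 m = g2 m)
 (g1 g2 : Hom P' T) : (forall a, g1 (Phi a) = g2 (Phi a)) -> forall z, g1 z = g2 z.
Proof.
  intros Ha z. destruct (gen z) as [m [a ->]]. rewrite !hmul, Ha. f_equal.
  apply (Tuniq (hcomp g1 k) (hcomp g2 k)). intro n; simpl. rewrite <- comm. apply Ha.
Qed.

Definition idh (G : Group) : Hom G G := MkHom _ _ (fun x => x) (fun _ _ => eq_refl).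

Theorem proposition3p1 (A B : Group) (phi : Hom A B) (L : Localization phi) :
  (forall (G K E : Group) (i : Hom K E) (p : Hom E (LG L G)) (H : ses i p),
      is_local phi K -> is_local phi E ->
      L_flat L (pb_in (eta L G) H) (pb_proj p (eta L G))) ->
  conditionally_flat L.
Proof.
  intros Hyp N E Q i p H Hfl Q' h Lj Lq HLj HLq.
  destruct (LG_ext L (LG_local L E) (hcomp (eta L E) i)) as [Li HLi].
  destruct (LG_ext L (LG_local L Q) (hcomp (eta L Q) p)) as [Lp HLp].
  assert (Hs := Hfl Li Lp HLi HLp).
  destruct (LG_ext L (LG_local L Q) (hcomp (eta L Q) h)) as [Lh HLh].
  assert (H1 := pb_ses Lh Hs).
  assert (Hloc := pb_local Lp Lh (LG_local L E) (LG_local L Q') (LG_local L Q)).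
  assert (Hfl2 := Hyp Q' (LG L N) (pullback Lp Lh) (pb_in Lh Hs) (pb_proj Lp Lh) H1 (LG_local L N) Hloc).
  set (k := pb_in (eta L Q') H1).
  set (q' := pb_proj (pb_proj Lp Lh) (eta L Q')).
  assert (H2 := pb_ses (eta L Q') H1).
  fold k q' in H2, Hfl2.
  set (P := pullback p h) in *.
  set (P' := pullback (pb_proj Lp Lh) (eta L Q')) in *.
  set (j := pb_in h H) in *.
  set (q := pb_proj p h) in *.
  assert (pf1 : forall a : P, Lp (fst (eta L E (fst (proj1_sig a)), eta L Q' (snd (proj1_sig a))))
                  = Lh (snd (eta L E (fst (proj1_sig a)), eta L Q' (snd (proj1_sig a))))).
  { intro a; simpl. rewrite HLp, HLh; simpl. f_equal. exact (proj2_sig a). }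
  set (inner := fun a : P => exist _ _ (pf1 a) : pullback Lp Lh).
  assert (pf2 : forall a : P, (pb_proj Lp Lh) (fst (inner a, snd (proj1_sig a)))
                  = eta L Q' (snd (inner a, snd (proj1_sig a)))).
  { intro a; reflexivity. }
  set (Phi0 := fun a : P => exist _ _ (pf2 a) : P').
  assert (Phim : forall x y, Phi0 (gmul x y) = gmul (Phi0 x) (Phi0 y)).
  { intros x y. apply pb_eq. simpl. f_equal. apply pb_eq. simpl. rewrite !hmul. reflexivity. }
  set (Phi := MkHom _ _ Phi0 Phim).
  assert (kinj : forall m1 m2, k m1 = k m2 -> m1 = m2) by exact (ses_inj H2).
  assert (comm : forall n, Phi (j n) = k (eta L N n)).
  { intro n. apply pb_eq. simpl. f_equal. apply pb_eq. simpl. rewrite HLi, hom_one. reflexivity. }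
  assert (gen : forall z, exists m a, z = gmul (k m) (Phi a)).
  { intros [[[[x y] Hw] q1] Hz]. simpl in Hz, Hw.
    destruct (ses_surj H (h q1)) as [e He].
    assert (Hx : Lp (gmul x (ginv (eta L E e))) = gone).
    { rewrite hmul, hom_inv, Hw, Hz, HLh, HLp. simpl. rewrite He. apply gmulVr. }
    destruct (proj1 (ses_exact Hs _) Hx) as [m Hm].
    exists m, (exist _ (e, q1) He : P). apply pb_eq; simpl. rewrite gmul1l. f_equal.
    apply pb_eq; simpl. rewrite Hm, mulKr', gmul1l, Hz. reflexivity. }
  assert (refl : forall a m, Phi a = k m -> exists n, a = j n).
  { intros [[e q1] He] m Ha.
    assert (Hq := f_equal (fun z => snd (proj1_sig z)) Ha). simpl in Hq. subst q1.
    assert (He' : p e = gone) by (rewrite (He : p e = h gone); apply hom_one).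
    destruct (proj1 (ses_exact H e) He') as [n Hn].
    exists n. apply pb_eq; simpl. rewrite Hn. reflexivity. }
  assert (norm : forall a m, exists m', gmul (gmul (Phi a) (k m)) (ginv (Phi a)) = k m').
  { intros a m.
    assert (E0 : q' (k m) = gone) by (apply (ses_exact H2); eauto).
    assert (E1 : q' (gmul (gmul (Phi a) (k m)) (ginv (Phi a))) = gone)
      by (rewrite !hmul, hom_inv, E0, gmul1r, gmulVr; reflexivity).
    destruct (proj1 (ses_exact H2 _) E1) as [m' Hm']. exists m'. symmetry; exact Hm'. }
  assert (Tu : forall T, is_local phi T -> forall g1 g2 : Hom (LG L N) T,
     (forall n, g1 (eta L N n) = g2 (eta L N n)) -> forall m, g1 m = g2 m)
    by (intros T HT g1 g2 Hg m; exact (LG_uniq L _ HT g1 g2 Hg m)).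
  destruct (key_ext j Phi k (eta L N) kinj comm gen refl norm (Tu _ (LG_local L P)) (eta L P) Lj HLj)
    as [g Hg].
  destruct (LG_ext L (LG_local L P) g) as [Psi HPsi].
  destruct (LG_ext L (LG_local L P') (hcomp (eta L P') Phi)) as [LPhi HLPhi].
  assert (PsiPhi : forall x, Psi (LPhi x) = x).
  { intro x. apply (LG_uniq L _ (LG_local L P) (hcomp Psi LPhi) (idh _)). intro a. simpl.
    rewrite HLPhi. simpl. rewrite HPsi, Hg. reflexivity. }
  assert (PhiPsi : forall y, LPhi (Psi y) = y).
  { intro y. apply (LG_uniq L _ (LG_local L P') (hcomp LPhi Psi) (idh _)). intro z. simpl.
    rewrite HPsi. apply (key_uniq j Phi k (eta L N) comm gen (Tu _ (LG_local L P')) (hcomp LPhi g) (eta L P')).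
    intro a. simpl. rewrite Hg, HLPhi. reflexivity. }
  destruct (LG_ext L (LG_local L P') (hcomp (eta L P') k)) as [Lk HLk].
  destruct (LG_ext L (LG_local L Q') (hcomp (eta L Q') q')) as [Lq' HLq'].
  assert (Hs2 := Hfl2 Lk Lq' HLk HLq').
  destruct (LG_ext L (LG_local L N) (idh (LG L N))) as [r Hr].
  assert (Hr' : forall x, r (eta L _ x) = x) by exact Hr.
  assert (etar : forall y, eta L (LG L N) (r y) = y).
  { intro y. apply (LG_uniq L _ (LG_local L _) (hcomp (eta L _) r) (idh _)). intro m. simpl.
    rewrite Hr. reflexivity. }
  assert (Rel1 : forall x, Lq' (LPhi x) = Lq x).
  { intro x. apply (LG_uniq L _ (LG_local L Q') (hcomp Lq' LPhi) Lq). intro a. simpl.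
    rewrite HLPhi, HLq. simpl. rewrite HLq'. reflexivity. }
  assert (Rel2 : forall n, LPhi (Lj n) = Lk (eta L _ n)).
  { intro n. apply (LG_uniq L _ (LG_local L P') (hcomp LPhi Lj) (hcomp Lk (eta L _))). intro a. simpl.
    rewrite HLj, HLPhi, HLk. simpl. exact (f_equal (eta L P') (comm a)). }
  constructor.
  - intros n1 n2 Hn. rewrite <- (Hr' n1), <- (Hr' n2). f_equal.
    apply (ses_inj Hs2). rewrite <- !Rel2, Hn. reflexivity.
  - intro y. destruct (ses_surj Hs2 y) as [z Hz]. exists (Psi z).
    rewrite <- Rel1, PhiPsi. exact Hz.
  - intro x. split.
    + intro Hx. rewrite <- Rel1 in Hx. destruct (proj1 (ses_exact Hs2 _) Hx) as [m Hm].
      exists (r m). rewrite <- (PsiPhi (Lj (r m))), <- (PsiPhi x). f_equal.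
      rewrite Rel2, etar. exact Hm.
    + intros [n <-]. rewrite <- Rel1, Rel2. apply (ses_exact Hs2). eauto.
Qed.
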